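(* Let $h \ge 2$ and $k \ge 3$ be integers, let $b$ be an integer, and let $A = [0,k-2] \cup \{b\}$. If $b > h(k-2)$, then \[ |hA| = (h+1)\left(1 + \frac{h(k-2)}{2}\right). \] If $b \in [k-1, h(k-2)]$, then there exist unique integers $i_0 \in [0,h-2]$ and $r \in [0,k-3]$ such that $b = (h-i_0)(k-2) - r$, and \[ |hA| = (i_0+1)b + (h-i_0)(h(k-2)+1) - \frac{(h+i_0+1)(h-i_0)(k-2)}{2}. \]
   Context: For real $u,v$, $[u,v] = \{n \in \mathbf{Z} : u \le n \le v\}$. For a positive integer $h$ and a finite set $A$ of integers, $hA$ denotes the set of all sums $a_1+\cdots+a_h$ with $a_1,\ldots,a_h \in A$ (not necessarily distinct). *)

(* Defs.v *)
From HB Require Import structures.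
From mathcomp Require Import all_boot all_order all_algebra.
From mathcomp Require Import finmap.
Set Implicit Arguments. Unset Strict Implicit. Unset Printing Implicit Defensive.
Import Order.TTheory GRing.Theory Num.Theory.
Local Open Scope fset_scope.
Local Open Scope ring_scope.

Fixpoint hsumset (h : nat) (A : {fset int}) : {fset int} :=
  match h with
  | 0%N => [fset (0 : int)]
  | h'.+1 => [fset (a + x) | a in A, x in hsumset h' A]
  end.

Definition zinterval0 (m : nat) : {fset int} := [fset (i%:Z) | i in iota 0 m.+1].

(* Main.v *)
Require Import Defs.
From HB Require Import structures.
From mathcomp Require Import all_boot all_order all_algebra.
From mathcomp Require Import finmap zify ring lra.
Import Order.TTheory GRing.Theory Num.Theory.
Local Open Scope fset_scope.
Local Open Scope ring_scope.

Lemma memA (m : nat) (b a : int) :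
  a \in zinterval0 m `|` [fset b] <-> ((exists t : nat, (t <= m)%N /\ a = t%:Z) \/ a = b).
Proof.
rewrite in_fsetU in_fset1; split.
  case/orP => [/imfsetP [t + ->]|/eqP ->]; last by right.
  move=> H; left; exists t; split => //; move: H; change (t \in iota 0 m.+1 -> (t <= m)%N); rewrite mem_iota; lia.
case => [[t [tm ->]]|->]; last by rewrite eqxx orbT.
apply/orP; left; apply/imfsetP; exists t => //.
change (t \in iota 0 m.+1); rewrite mem_iota; lia.
Qed.

Lemma memH (m h : nat) (b x : int) :
  x \in hsumset h (zinterval0 m `|` [fset b]) <->
  exists j t : nat, [/\ (j <= h)%N, (t <= (h - j) * m)%N & x = j%:Z * b + t%:Z].
Proof.
elim: h x => [|h IH] x /=.
  rewrite in_fset1; split.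
    by move/eqP => ->; exists 0%N, 0%N; rewrite mul0r addr0.
  by case=> j [t [j0 + ->]]; move: j0; rewrite leqn0 => /eqP ->; rewrite sub0n mul0n leqn0 => /eqP ->; rewrite mul0r addr0.
split.
  case/imfset2P => a /= /memA Ha [y /= /IH [j [t [jh tj ->]]] ->].
  case: Ha => [[s [sm ->]]|->].
    exists j, (s + t)%N; split => //; first by apply: leq_trans jh _.
      have -> : (h.+1 - j = (h - j).+1)%N by rewrite subSn.
      by rewrite mulSn; apply: leq_add.
    by rewrite PoszD; ring.
  exists j.+1, t; split => //.
  by rewrite -addn1 PoszD; ring.
case=> j [t [jh tj ->]].
apply/imfset2P.
case: (ltnP j h.+1) => [jlt|jge].
  have tsplit : exists s u : nat, [/\ (s <= m)%N, (u <= (h - j) * m)%N & t = (s + u)%N].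
    case: (leqP t m) => tm.
      by exists t, 0%N; rewrite addn0.
    exists m, (t - m)%N; split => //; last by rewrite subnKC // ltnW.
    move: tj; rewrite subSn // mulSn; lia.
  case: tsplit => s [u [sm um ->]].
  exists (s%:Z); first by apply/memA; left; exists s.
  exists (j%:Z * b + u%:Z); first by apply/IH; exists j, u; split.
  by rewrite PoszD; ring.
have ej : j = h.+1 by apply/eqP; rewrite eqn_leq jh jge. subst j.
move: tj; rewrite subnn mul0n leqn0 => /eqP ->.
exists b; first by apply/memA; right.
exists (h%:Z * b + 0%:Z); first by apply/IH; exists h, 0%N; split.
by rewrite -addn1 PoszD; ring.
Qed.
Lemma cardZ (s : seq nat) : uniq s -> #|` [fset x%:Z | x in s]| = size s.
Proof.
move=> us. rewrite card_imfset /=; last by move=> x y [].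
by rewrite undup_id.
Qed.

Definition P (B m h : nat) (x : nat) : bool :=
  has (fun j => (j * B <= x <= j * B + (h-j) * m)%N) (iota 0 h.+1).

Lemma mono (B m h j g : nat) : (m <= B)%N -> (j <= g)%N -> (g <= h)%N ->
  (j * B + (h - j) * m <= g * B + (h - g) * m)%N.
Proof.
move=> mB jg gh.
have -> : g = (j + (g - j))%N by rewrite subnKC.
set d := (g - j)%N.
have -> : (h - j = (h - (j + d)) + d)%N by lia.
have := leq_mul (leqnn d) mB.
rewrite !mulnDl; lia.
Qed.

Lemma count_ge (c s L : nat) : count (fun x => c <= x)%N (iota s L) = (L - (c - s))%N.
Proof.
elim: L => [|L IH] //.
rewrite -addn1 iotaD count_cat IH /= addn0.
case: (leqP c (s + L)) => H /=; lia.
Qed.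

Lemma setE h m B : (m <= B)%N ->
  hsumset h (zinterval0 m `|` [fset B%:Z]) =
  [fset x%:Z | x in [seq x <- iota 0 (h * B).+1 | P B m h x]].
Proof.
move=> mB; apply/fsetP => x; apply/idP/idP.
  move/memH => [j [t [jh tj ->]]].
  apply/imfsetP; exists (j * B + t)%N; last by rewrite PoszD PoszM.
  have h1 : ((h - j) * m <= (h - j) * B)%N by rewrite leq_mul2l mB orbT.
  have h2 : (j * B + (h - j) * B = h * B)%N by rewrite -mulnDl subnKC.
  change (j * B + t \in [seq x <- iota 0 (h * B).+1 | P B m h x])%N.
  rewrite mem_filter mem_iota; apply/andP; split; last by lia.
  apply/hasP; exists j; first by rewrite mem_iota; lia.
  lia.
case/imfsetP => y yin ->.
have : y \in [seq x <- iota 0 (h * B).+1 | P B m h x] by [].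
rewrite mem_filter => /andP [/hasP [j jin /andP [lo hi]] _].
apply/memH; exists j, (y - j * B)%N; split.
- by move: jin; rewrite mem_iota; lia.
- lia.
- by rewrite -PoszM -PoszD subnKC.
Qed.

Lemma cardH h m B : (m <= B)%N ->
  #|` hsumset h (zinterval0 m `|` [fset B%:Z])| = count (P B m h) (iota 0 (h * B).+1).
Proof.
move=> mB; rewrite setE // cardZ ?size_filter //.
by rewrite filter_uniq // iota_uniq.
Qed.

Definition E (B m h g : nat) := (g * B + (h - g) * m)%N.
Definition F (B m h g : nat) := count (P B m h) (iota 0 (E B m h g).+1).

Lemma F0 B m h : F B m h 0 = (h * m).+1.
Proof.
rewrite /F /E mul0n add0n subn0.
rewrite (@eq_in_count _ _ predT); first by rewrite count_predT size_iota.
move=> x; rewrite mem_iota => xin; apply/hasP; exists 0%N => //.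
rewrite mul0n add0n subn0; lia.
Qed.

Lemma Fh B m h : F B m h h = count (P B m h) (iota 0 (h * B).+1).
Proof. by rewrite /F /E subnn mul0n addn0. Qed.

Lemma Fstep B m h g : (m <= B)%N -> (g < h)%N ->
  F B m h g.+1 = (F B m h g + ((B - m) - (B - (h - g) * m - 1)))%N.
Proof.
move=> mB gh.
have hg : ((h - g) * m = (h - g.+1) * m + m)%N.
  have -> : (h - g = (h - g.+1).+1)%N by lia.
  by rewrite mulSn addnC.
have eE : (E B m h g.+1).+1 = ((E B m h g).+1 + (B - m))%N.
  rewrite /E mulSn; lia.
rewrite /F eE iotaD count_cat add0n; congr addn.
rewrite (@eq_in_count _ _ (fun x => g.+1 * B <= x)%N); last first.
  move=> x; rewrite mem_iota => /andP [xlo xhi].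
  apply/hasP/idP.
    move=> [j jin /andP [lo hi]].
    case: (leqP j g) => jg.
      have := @mono B m h j g mB jg (ltnW gh); rewrite /E in xlo; lia.
    exact: leq_trans (leq_mul jg (leqnn B)) lo.
  move=> H; exists g.+1; first by rewrite mem_iota; lia.
  rewrite H /=; move: xhi; rewrite /E mulSn; lia.
rewrite count_ge /E mulSn; lia.
Qed.

Lemma Sn (n : nat) : (n.+1)%:R = n%:R + 1 :> rat.
Proof. by rewrite -addn1 natrD. Qed.

Lemma closed1 B m h : (0 < m)%N -> (h * m < B)%N -> forall g, (g <= h)%N ->
  2 * (F B m h g)%:R = 2 * (h%:R * m%:R + 1) + 2 * g%:R
     + m%:R * g%:R * (2 * h%:R - 1 - g%:R) :> rat.
Proof.
move=> m0 hB; elim => [|g IH] gh.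
  by rewrite F0 (Sn (h * m)) natrM; ring.
have gh' : (g < h)%N by [].
have mB : (m <= B)%N by apply: leq_trans (ltnW hB); apply: leq_pmull; lia.
rewrite Fstep //.
have d : ((B - m) - (B - (h - g) * m - 1) = (h - g.+1) * m + 1)%N.
  have hg : ((h - g) * m = (h - g.+1) * m + m)%N.
    have -> : (h - g = (h - g.+1).+1)%N by lia.
    by rewrite mulSn addnC.
  have : ((h - g) * m <= h * m)%N by rewrite leq_mul2r leq_subr orbT.
  move=> le; move: hg le hB; generalize ((h - g) * m)%N ((h - g.+1) * m)%N (h * m)%N => X Y Z; lia.
rewrite d natrD mulrDr IH ?(ltnW gh) // natrD natrM natrB // Sn; ring.
Qed.

Lemma phase1 B m h q : (m < B)%N -> (B <= q.+1 * m)%N -> (q < h)%N ->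
  forall g, (g <= h - q)%N ->
  2 * (F B m h g)%:R = 2 * (h%:R * m%:R + 1) + 2 * g%:R * (B%:R - m%:R) :> rat.
Proof.
move=> mB Bq qh; elim => [|g IH] gh.
  by rewrite F0 (Sn (h * m)) natrM; ring.
rewrite Fstep //; last by lia.
have d : ((B - m) - (B - (h - g) * m - 1) = B - m)%N.
  have : (q.+1 * m <= (h - g) * m)%N by rewrite leq_mul2r; apply/orP; right; lia.
  move: Bq; generalize (q.+1 * m)%N ((h - g) * m)%N => X Y; lia.
rewrite d natrD mulrDr IH; last by lia.
rewrite natrB ?(Sn g); first ring.
all: exact: ltnW mB.
Qed.

Lemma phase2 B m h q : (0 < m)%N -> (m < B)%N -> (q * m < B)%N -> (B <= q.+1 * m)%N -> (q < h)%N ->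
  forall t, (t <= q)%N ->
  2 * (F B m h (h - q + t))%:R = 2 * (h%:R * m%:R + 1) + 2 * (h%:R - q%:R) * (B%:R - m%:R)
    + 2 * t%:R + m%:R * t%:R * (2 * q%:R - t%:R - 1) :> rat.
Proof.
move=> m0 mB qB Bq qh; elim => [|t IH] tq.
  rewrite addn0 (@phase1 B m h q) // natrB ?(ltnW qh) //; ring.
rewrite addnS Fstep //; last by lia.
have d : ((B - m) - (B - (h - (h - q + t)) * m - 1) = (q - t.+1) * m + 1)%N.
  have e1 : (h - (h - q + t) = (q - t.+1).+1)%N by lia.
  rewrite e1 mulSn.
  have : ((q - t.+1).+1 * m <= q * m)%N by rewrite leq_mul2r; apply/orP; right; lia.
  rewrite mulSn.
  move: qB; generalize ((q - t.+1) * m)%N (q * m)%N => X Y; lia.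
rewrite d natrD mulrDr IH; last by lia.
rewrite natrD natrM natrB // (Sn t); first ring.
exact: ltnW mB.
Qed.

Lemma QN (n : nat) : (n%:Z)%:~R = n%:R :> rat.
Proof. by []. Qed.

Theorem mainTheorem7 (h k : nat) (b : int) :
  (2 <= h)%N -> (3 <= k)%N ->
  let A := zinterval0 (k - 2) `|` [fset b] in
  let hA := hsumset h A in
  (b > (h%:Z) * (k%:Z - 2) ->
     (#|` hA|%:Q) = (h%:Q + 1) * (1 + (h%:Q * (k%:Q - 2)) / 2)) /\
  (k%:Z - 1 <= b <= (h%:Z) * (k%:Z - 2) ->
     exists i0 r : int,
       [/\ 0 <= i0 <= h%:Z - 2, 0 <= r <= k%:Z - 3,
           b = (h%:Z - i0) * (k%:Z - 2) - r,
           (forall i0' r' : int, 0 <= i0' <= h%:Z - 2 -> 0 <= r' <= k%:Z - 3 ->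
              b = (h%:Z - i0') * (k%:Z - 2) - r' -> i0' = i0 /\ r' = r) &
           (#|` hA|%:Q) =
             (i0%:~R + 1) * b%:~R + (h%:Q - i0%:~R) * (h%:Q * (k%:Q - 2) + 1)
             - ((h%:Q + i0%:~R + 1) * (h%:Q - i0%:~R) * (k%:Q - 2)) / 2]).
Proof.
move=> h2 k3 A hA.
have km : k%:Z - 2 = (k - 2)%N%:Z by lia.
have k1 : k%:Z - 1 = (k - 2)%N%:Z + 1 by lia.
have k3' : k%:Z - 3 = (k - 2)%N%:Z - 1 by lia.
have kQ : k%:Q - 2 = (k - 2)%N%:R by rewrite QN natrB; last lia.
rewrite /hA /A {hA A}; move: km k1 k3' kQ.
have : (0 < k - 2)%N by lia.
generalize (k - 2)%N => m m0 km k1 k3' kQ.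
rewrite km k1 k3' kQ !QN.
have two0 : (2 : rat) != 0 by [].
split.
  move=> hb.
  have [B eb] : exists B : nat, b = B.
    exists `|b|%N; rewrite gez0_abs //; apply: le_trans (ltW hb).
    by rewrite -PoszM.
  subst b; move: hb; rewrite -PoszM ltz_nat => hb.
  have mB : (m <= B)%N by apply: leq_trans (ltnW hb); apply: leq_pmull; lia.
  rewrite cardH // -Fh.
  have := @closed1 B m h m0 hb h (leqnn h) => H.
  apply: (mulfI two0); rewrite H; by field.
move=> /andP [lo hi].
have [B eb] : exists B : nat, b = B.
  exists `|b|%N; rewrite gez0_abs //; apply: le_trans lo; lia.
subst b; rewrite -PoszM lez_nat in hi; rewrite -PoszD lez_nat addn1 in lo; rename lo into mB.
have [q [qB Bq]] : exists q, (q * m < B)%N /\ (B <= q.+1 * m)%N.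
  exists (B.-1 %/ m)%N; have dq := divn_eq B.-1 m; have md := ltn_pmod B.-1 m0.
  rewrite mulSn; move: dq md; generalize ((B.-1 %/ m)%N * m)%N (B.-1 %% m)%N => X Y.
  lia.
have q1 : (0 < q)%N.
  rewrite lt0n; apply/negP => /eqP q0; move: Bq; rewrite q0 mul1n; lia.
have qh : (q < h)%N.
  rewrite ltnNge; apply/negP => hq; have := leq_mul hq (leqnn m); lia.
exists (h - q.+1)%N%:Z, (q.+1 * m - B)%N%:Z; split.
- lia.
- move: qB; rewrite mulSn; generalize (q * m)%N => X; lia.
- have -> : h%:Z - (h - q.+1)%N%:Z = q.+1 by lia.
  rewrite -PoszM; move: Bq; generalize (q.+1 * m)%N => X; lia.
- move=> i0' r' /andP [i1 i2] /andP [r1 r2] e.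
  have qBz : q%:Z * m%:Z < B%:Z by rewrite -PoszM ltz_nat.
  have Bqz : B%:Z <= (q%:Z + 1) * m%:Z by rewrite -[_ + 1]PoszD -PoszM lez_nat addn1.
  have mz : 0 <= m%:Z by [].
  move: e; set N := h%:Z - i0' => e.
  have H1 : q%:Z < N.
    rewrite ltNge; apply/negP => H; have := ler_wpM2r mz H; lia.
  have H2 : N < q%:Z + 2.
    rewrite ltNge; apply/negP => H; have := ler_wpM2r mz H; lia.
  have eN : N = q%:Z + 1 by lia.
  have ei : i0' = (h - q.+1)%N%:Z by move: eN; rewrite /N; lia.
  split => //.
  move: e; rewrite eN -[q%:Z + 1]PoszD -PoszM addn1.
  move: Bq; generalize (q.+1 * m)%N => X; lia.
- rewrite cardH ?(ltnW mB) // -Fh.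
  have := @phase2 B m h q m0 mB qB Bq qh q (leqnn q); rewrite subnK ?(ltnW qh) // => H.
  apply: (mulfI two0); rewrite H QN natrB //.
  by rewrite (Sn q); field.
Qed.
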